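(* Let $K\ge2$, $\varepsilon>0$, $\gamma=\gamma(\mu^* )\in\mathcal{P}^\varepsilon(K)$, $\eta\ge0$ and $\varepsilon_\pi\in[0,1]$. For $o\in\mathbb{R}^K_{>0}$ define $$\pi^{\varepsilon_\pi}_k(o)=(1-\varepsilon_\pi)\frac{\gamma_ko_k^{-\eta}}{\sum_{\ell}\gamma_\ell o_\ell^{-\eta}}+\varepsilon_\pi\gamma_k.$$ Then $\mathbf 1=(1,\dots,1)$ is a globally asymptotically stable equilibrium of the system $\dot o_k(t)=\dfrac{\pi^{\varepsilon_\pi}_k(o(t))}{\gamma_k}-o_k(t)$, $k=1,\dots,K$.
   Context: $\mathcal{P}^\varepsilon(K)$ is the set of probability vectors on $\{1,\dots,K\}$ with entries $\ge\varepsilon$. For $\dot z=h(z)$ with solutions $z(t;z_0,t_0)$, an equilibrium $z^*$ is globally asymptotically stable if (1) for each $\eta'>0$ there is $\delta>0$ independent of $t_0$ with $|z_0-z^*|<\delta\Rightarrow|z(t;z_0,t_0)-z^*|<\eta'$ for all $t\ge t_0\ge 0$, and (2) for all $\eta',\rho>0$ there is $T<\infty$ independent of $t_0$ with $|z(t;z_0,t_0)-z^*|<\eta'$ for $t\ge t_0+T$ whenever $|z_0-z^*|<\rho$. *)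

(* Defs.v *)
From Stdlib Require Import Reals.
From Coquelicot Require Import Coquelicot.
Open Scope R_scope.

(* Vectors in R^K are functions nat -> R; only indices k < K matter. *)

Fixpoint rsum (n : nat) (f : nat -> R) : R :=
  match n with O => 0 | S m => rsum m f + f m end.

Definition in_Peps (K : nat) (eps : R) (g : nat -> R) : Prop :=
  (forall k, (k < K)%nat -> eps <= g k) /\ rsum K g = 1.

Definition pos_vec (K : nat) (o : nat -> R) : Prop :=
  forall k, (k < K)%nat -> 0 < o k.

Definition distK (K : nat) (x y : nat -> R) : R :=
  sqrt (rsum K (fun k => (x k - y k) ^ 2)).

Definition pi_eps (K : nat) (gamma : nat -> R) (eta epspi : R)
    (o : nat -> R) (k : nat) : R :=
  (1 - epspi) * (gamma k * Rpower (o k) (- eta))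
    / rsum K (fun l => gamma l * Rpower (o l) (- eta))
  + epspi * gamma k.

Definition hfield (K : nat) (gamma : nat -> R) (eta epspi : R)
    (o : nat -> R) (k : nat) : R :=
  pi_eps K gamma eta epspi o k / gamma k - o k.

Definition is_solution (K : nat) (h : (nat -> R) -> nat -> R)
    (dom : (nat -> R) -> Prop) (z : R -> nat -> R) (t0 : R) : Prop :=
  (forall t, t0 <= t -> dom (z t)) /\
  (forall k, (k < K)%nat ->
     (forall t, t0 < t -> is_derive (fun s => z s k) t (h (z t) k)) /\
     filterlim (fun s => z s k) (at_right t0) (locally (z t0 k))).

Definition is_equilibrium (K : nat) (h : (nat -> R) -> nat -> R)
    (dom : (nat -> R) -> Prop) (zs : nat -> R) : Prop :=
  dom zs /\ forall k, (k < K)%nat -> h zs k = 0.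

Definition GAS (K : nat) (h : (nat -> R) -> nat -> R)
    (dom : (nat -> R) -> Prop) (zs : nat -> R) : Prop :=
  (forall eta', 0 < eta' -> exists delta, 0 < delta /\
     forall t0 z, 0 <= t0 -> is_solution K h dom z t0 ->
       distK K (z t0) zs < delta ->
       forall t, t0 <= t -> distK K (z t) zs < eta') /\
  (forall eta' rho, 0 < eta' -> 0 < rho -> exists T : R,
     forall t0 z, 0 <= t0 -> is_solution K h dom z t0 ->
       distK K (z t0) zs < rho ->
       forall t, t0 + T <= t -> distK K (z t) zs < eta').

(* Main.v *)
Require Import Defs.
From Stdlib Require Import Reals Lra Lia.
From Coquelicot Require Import Coquelicot.
Open Scope R_scope.

Lemma rsum_ext n f g : (forall k, (k < n)%nat -> f k = g k) -> rsum n f = rsum n g.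
Proof. induction n; simpl; intros H; auto. rewrite IHn by (intros; apply H; lia). rewrite H by lia. ring. Qed.

Lemma rsum_le n f g : (forall k, (k < n)%nat -> f k <= g k) -> rsum n f <= rsum n g.
Proof. induction n; simpl; intros H; [lra|]. assert (H1 := H n ltac:(lia)). assert (H2 := IHn ltac:(intros; apply H; lia)). lra. Qed.

Lemma rsum_zero n : rsum n (fun _ => 0) = 0.
Proof. induction n; simpl; auto; rewrite IHn; ring. Qed.

Lemma rsum_lin4 n a b c d f g h i :
  rsum n (fun k => a * f k + b * g k + c * h k + d * i k)
  = a * rsum n f + b * rsum n g + c * rsum n h + d * rsum n i.
Proof. induction n; simpl; [ring|]. rewrite IHn; ring. Qed.

Lemma rsum_lin2 n a b f g :
  rsum n (fun k => a * f k + b * g k) = a * rsum n f + b * rsum n g.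
Proof. induction n; simpl; [ring|]. rewrite IHn; ring. Qed.

Lemma rsum_ge_term n f k : (forall i, (i < n)%nat -> 0 <= f i) -> (k < n)%nat -> f k <= rsum n f.
Proof.
  induction n; simpl; intros H Hk; [lia|].
  assert (H0 : 0 <= rsum n f).
  { rewrite <- (rsum_zero n). apply rsum_le. intros; apply H; lia. }
  destruct (Nat.eq_dec k n) as [->|Hne].
  - lra.
  - assert (f k <= rsum n f) by (apply IHn; [intros; apply H; lia| lia]).
    assert (0 <= f n) by (apply H; lia). lra.
Qed.

Lemma rsum_nonneg n f : (forall i, (i < n)%nat -> 0 <= f i) -> 0 <= rsum n f.
Proof. intros H. rewrite <- (rsum_zero n). apply rsum_le. auto. Qed.

Lemma chebyshev n g o a :
  (forall k, (k < n)%nat -> 0 <= g k) ->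
  (forall k l, (k < n)%nat -> (l < n)%nat -> (o k - o l) * (a k - a l) <= 0) ->
  rsum n (fun k => g k * o k * a k) * rsum n g <=
  rsum n (fun k => g k * o k) * rsum n (fun k => g k * a k).
Proof.
  intros Hg Hoa.
  set (G := rsum n g). set (P := rsum n (fun k => g k * o k * a k)).
  set (O := rsum n (fun k => g k * o k)). set (A := rsum n (fun k => g k * a k)).
  assert (HD : rsum n (fun k => rsum n (fun l => g k * g l * ((o k - o l) * (a k - a l)))) <= 0).
  { rewrite <- (rsum_zero n). apply rsum_le. intros k Hk.
    rewrite <- (rsum_zero n). apply rsum_le. intros l Hl.
    assert (H1 := Hoa k l Hk Hl). assert (0 <= g k * g l).
    { apply Rmult_le_pos; auto. }
    nra. }
  assert (HE : rsum n (fun k => rsum n (fun l => g k * g l * ((o k - o l) * (a k - a l))))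
     = 2 * (P * G - O * A)).
  { rewrite (rsum_ext n _ (fun k => G * (g k * o k * a k) + (- A) * (g k * o k)
          + (- O) * (g k * a k) + P * g k)).
    - rewrite rsum_lin4. fold G P O A. ring.
    - intros k Hk.
      rewrite (rsum_ext n _ (fun l => (g k * o k * a k) * g l + (- (g k * o k)) * (g l * a l)
          + (- (g k * a k)) * (g l * o l) + g k * (g l * o l * a l))).
      + rewrite rsum_lin4.
        replace (rsum n (fun l => g l * o l * a l)) with P by reflexivity.
        fold G A. replace (rsum n (fun l => g l * o l)) with O by reflexivity. ring.
      + intros; ring. }
  lra.
Qed.

Lemma rpow_anti x y eta : 0 < x -> 0 < y -> 0 <= eta ->
  (x - y) * (Rpower x (- eta) - Rpower y (- eta)) <= 0.
Proof.
  intros hx hy he. unfold Rpower.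
  destruct (Rle_lt_dec x y) as [Hxy|Hxy].
  - assert (ln x <= ln y) by (apply ln_le; auto).
    assert (exp (- eta * ln y) <= exp (- eta * ln x)).
    { destruct (Rle_lt_or_eq_dec (- eta * ln y) (- eta * ln x)) as [h|h]; [nra| |].
      left; apply exp_increasing; auto. rewrite h; lra. }
    nra.
  - assert (ln y <= ln x) by (apply ln_le; lra).
    assert (exp (- eta * ln x) <= exp (- eta * ln y)).
    { destruct (Rle_lt_or_eq_dec (- eta * ln x) (- eta * ln y)) as [h|h]; [nra| |].
      left; apply exp_increasing; auto. rewrite h; lra. }
    nra.
Qed.

Lemma dV_le K gamma eta epspi o :
  (forall k, (k < K)%nat -> 0 < gamma k) -> rsum K gamma = 1 -> (1 <= K)%nat ->
  0 <= eta -> 0 <= epspi <= 1 -> pos_vec K o ->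
  rsum K (fun k => gamma k * 2 * (o k - 1) * hfield K gamma eta epspi o k)
  <= -2 * rsum K (fun k => gamma k * (o k - 1) ^ 2).
Proof.
  intros Hg Hs HK he hep Ho.
  set (a := fun k => Rpower (o k) (- eta)).
  set (S := rsum K (fun l => gamma l * a l)).
  assert (HS : 0 < S).
  { unfold S. destruct K as [|K']; [lia|]. simpl.
    assert (0 <= rsum K' (fun l => gamma l * a l)).
    { apply rsum_nonneg. intros i Hi. apply Rmult_le_pos; [left; apply Hg; lia|].
      left; unfold a, Rpower; apply exp_pos. }
    assert (0 < gamma K' * a K'). { apply Rmult_lt_0_compat; [apply Hg; lia|]. unfold a, Rpower; apply exp_pos. }
    lra. }
  set (c := 1 - epspi).
  assert (Heq : forall k, (k < K)%nat ->
     gamma k * 2 * (o k - 1) * hfield K gamma eta epspi o k + 2 * (gamma k * (o k - 1) ^ 2)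
     = (2 * c / S) * (gamma k * o k * a k) + (- 2 * c) * (gamma k * o k)
       + (- 2 * c / S) * (gamma k * a k) + (2 * c) * gamma k).
  { intros k Hk. assert (0 < gamma k) by auto.
    unfold hfield, pi_eps. fold (a k). change (rsum K (fun l => gamma l * Rpower (o l) (- eta))) with S.
    unfold c. field. split; lra. }
  assert (Hsum : rsum K (fun k => gamma k * 2 * (o k - 1) * hfield K gamma eta epspi o k)
     + 2 * rsum K (fun k => gamma k * (o k - 1) ^ 2)
     = (2 * c / S) * rsum K (fun k => gamma k * o k * a k) + (- 2 * c) * rsum K (fun k => gamma k * o k)
       + (- 2 * c / S) * S + (2 * c) * rsum K gamma).
  { rewrite <- (Rmult_1_l (rsum K (fun k => gamma k * 2 * (o k - 1) * _))).
    rewrite <- rsum_lin2. unfold S. rewrite <- rsum_lin4. apply rsum_ext.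
    intros k Hk. rewrite <- Heq by auto. ring. }
  assert (Hch := chebyshev K gamma o a ltac:(intros; left; auto)
     ltac:(intros; apply rpow_anti; auto)).
  fold S in Hch. rewrite Hs in Hch, Hsum.
  assert (0 <= c) by (unfold c; lra).
  assert (HP : rsum K (fun k => gamma k * o k * a k) <= rsum K (fun k => gamma k * o k) * S) by lra.
  assert (Hr : (2 * c / S) * rsum K (fun k => gamma k * o k * a k) + (- 2 * c) * rsum K (fun k => gamma k * o k)
       + (- 2 * c / S) * S + (2 * c) * 1
       = (2 * c / S) * (rsum K (fun k => gamma k * o k * a k) - rsum K (fun k => gamma k * o k) * S)).
  { field. lra. }
  assert (0 <= 2 * c / S). { unfold Rdiv. apply Rmult_le_pos; [lra| left; apply Rinv_0_lt_compat; auto]. }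
  assert ((2 * c / S) * (rsum K (fun k => gamma k * o k * a k) - rsum K (fun k => gamma k * o k) * S) <= 0).
  { apply Rmult_le_0_l; lra. }
  lra.
Qed.

Lemma rsum_derive n (f : nat -> R -> R) df x :
  (forall k, (k < n)%nat -> is_derive (f k) x (df k)) ->
  is_derive (fun t => rsum n (fun k => f k t)) x (rsum n df).
Proof.
  induction n; simpl; intros H.
  - apply (is_derive_const 0 x).
  - apply (is_derive_plus (fun t => rsum n (fun k => f k t)) (f n)).
    + apply IHn; intros; apply H; lia.
    + apply H; lia.
Qed.

Lemma rsum_lim {T} {F : (T -> Prop) -> Prop} {FF : Filter F} n (f : nat -> T -> R) l :
  (forall k, (k < n)%nat -> filterlim (f k) F (locally (l k))) ->
  filterlim (fun t => rsum n (fun k => f k t)) F (locally (rsum n l)).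
Proof.
  induction n; simpl; intros H.
  - apply filterlim_const.
  - apply (filterlim_comp_2 (G := locally (rsum n l)) (H := locally (l n)) (fun t => rsum n (fun k => f k t)) (f n) Rplus).
    + apply IHn; intros; apply H; lia.
    + apply H; lia.
    + apply (filterlim_plus (rsum n l) (l n)).
Qed.

Lemma decay K gamma eta epspi z t0 :
  (forall k, (k < K)%nat -> 0 < gamma k) -> rsum K gamma = 1 -> (1 <= K)%nat ->
  0 <= eta -> 0 <= epspi <= 1 ->
  is_solution K (hfield K gamma eta epspi) (pos_vec K) z t0 ->
  forall t, t0 <= t ->
  rsum K (fun k => gamma k * (z t k - 1) ^ 2) * exp (2 * (t - t0))
  <= rsum K (fun k => gamma k * (z t0 k - 1) ^ 2).
Proof.
  intros Hg Hs HK he hep [Hdom Hsol] t Ht.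
  set (V := fun s => rsum K (fun k => gamma k * (z s k - 1) ^ 2)).
  set (W := fun s => V s * exp (2 * (s - t0))).
  change (W t <= V t0).
  assert (HV0 : V t0 = W t0). { unfold W. replace (2 * (t0 - t0)) with 0 by ring. rewrite exp_0. ring. }
  set (dV := fun s => rsum K (fun k => gamma k * 2 * (z s k - 1) * hfield K gamma eta epspi (z s) k)).
  assert (HdV : forall s, t0 < s -> is_derive V s (dV s)).
  { intros s Hs0. unfold V, dV.
    apply (rsum_derive K (fun k s => gamma k * (z s k - 1) ^ 2)).
    intros k Hk. destruct (Hsol k Hk) as [Hd _].
    assert (Hf : is_derive (fun x => gamma k * (x - 1) ^ 2) (z s k) (gamma k * 2 * (z s k - 1))).
    { auto_derive; [auto| simpl; ring]. }
    assert (Hc := is_derive_comp _ _ _ _ _ Hf (Hd s Hs0)).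
    simpl in Hc. unfold scal in Hc; simpl in Hc; unfold mult in Hc; simpl in Hc.
    replace (gamma k * 2 * (z s k - 1) * hfield K gamma eta epspi (z s) k)
      with (hfield K gamma eta epspi (z s) k * (gamma k * 2 * (z s k - 1))) by ring.
    exact Hc. }
  set (dW := fun s => dV s * exp (2 * (s - t0)) + V s * (2 * exp (2 * (s - t0)))).
  assert (HdW : forall s, t0 < s -> is_derive W s (dW s)).
  { intros s Hs0. unfold W, dW.
    apply (is_derive_mult V (fun s => exp (2 * (s - t0)))).
    - auto.
    - auto_derive; [auto| replace (s + - t0) with (s - t0) by ring; ring].
    - intros n m; exact (Rmult_comm n m). }
  assert (HdWle : forall s, t0 < s -> dW s <= 0).
  { intros s Hs0. unfold dW.
    assert (Hdom' : pos_vec K (z s)) by (apply Hdom; lra).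
    assert (H := dV_le K gamma eta epspi (z s) Hg Hs HK he hep Hdom').
    fold (V s) in H. change (rsum K _) with (dV s) in H.
    assert (0 < exp (2 * (s - t0))) by apply exp_pos. nra. }
  assert (Hmono : forall s, t0 < s -> s <= t -> W t <= W s).
  { intros s Hs0 Hst.
    destruct (MVT_gen W s t dW) as [c [Hc Heq]].
    - intros x Hx. apply HdW. unfold Rmin in Hx; destruct (Rle_dec s t); lra.
    - intros x Hx. assert (Hx' : t0 < x) by (unfold Rmin in Hx; destruct (Rle_dec s t); lra).
      apply derivable_continuous_pt. exists (dW x). apply is_derive_Reals. auto.
    - assert (t0 < c) by (unfold Rmin in Hc; destruct (Rle_dec s t); lra).
      assert (dW c <= 0) by auto. nra. }
  assert (Hlim : filterlim W (at_right t0) (locally (W t0))).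
  { unfold W. apply (filterlim_comp_2 (G := locally (V t0)) (H := locally (exp (2 * (t0 - t0)))) V (fun s => exp (2 * (s - t0))) Rmult).
    - unfold V. apply (rsum_lim K (fun k s => gamma k * (z s k - 1) ^ 2) (fun k => gamma k * (z t0 k - 1) ^ 2)).
      intros k Hk. destruct (Hsol k Hk) as [_ Hr].
      apply (filterlim_comp _ _ _ (fun s => z s k) (fun x => gamma k * (x - 1) ^ 2) _ (locally (z t0 k))); auto.
      apply (ex_derive_continuous (fun x => gamma k * (x - 1) ^ 2)). auto_derive; auto.
    - apply (filterlim_filter_le_1 (F := locally t0)).
      + apply filter_le_within.
      + apply (ex_derive_continuous (fun s => exp (2 * (s - t0)))). auto_derive; auto.
    - apply (filterlim_mult (V t0) (exp (2 * (t0 - t0)))). }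
  destruct (Rle_lt_or_eq_dec t0 t Ht) as [Hlt|Heq].
  - rewrite HV0. apply Rnot_lt_le. intros Hc.
    assert (Hev : at_right t0 (fun s => W s < W t /\ s < t)).
    { apply filter_and.
      - assert (Hb := Hlim (fun y => y < W t)). apply Hb.
        exists (mkposreal _ (Rlt_Rminus _ _ Hc)). intros y Hy.
        unfold ball in Hy; simpl in Hy; unfold AbsRing_ball, abs, minus, plus, opp in Hy; simpl in Hy.
        apply Rabs_lt_between in Hy. lra.
      - exists (mkposreal _ (Rlt_Rminus _ _ Hlt)). intros y Hy _.
        unfold ball in Hy; simpl in Hy; unfold AbsRing_ball, abs, minus, plus, opp in Hy; simpl in Hy.
        apply Rabs_lt_between in Hy. lra. }
    assert (Hev2 : at_right t0 (fun s => t0 < s /\ W s < W t /\ s < t)).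
    { apply filter_and; auto. exists (mkposreal 1 Rlt_0_1). intros; auto. }
    destruct (filter_ex _ Hev2) as [s [H1 [H2 H3]]].
    assert (W t <= W s) by (apply Hmono; lra). lra.
  - subst t. lra.
Qed.

Theorem lemma6 (K : nat) (eps : R) (gamma : nat -> R) (eta epspi : R) :
  (2 <= K)%nat -> 0 < eps -> in_Peps K eps gamma -> 0 <= eta ->
  0 <= epspi <= 1 ->
  is_equilibrium K (hfield K gamma eta epspi) (pos_vec K) (fun _ => 1) /\
  GAS K (hfield K gamma eta epspi) (pos_vec K) (fun _ => 1).
Proof.
  intros HK heps [Hge Hs] he hep.
  assert (Hg : forall k, (k < K)%nat -> 0 < gamma k) by (intros k Hk; specialize (Hge k Hk); lra).
  assert (Hg1 : forall k, (k < K)%nat -> gamma k <= 1).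
  { intros k Hk. rewrite <- Hs. apply rsum_ge_term; auto. intros; left; auto. }
  assert (He1 : eps <= 1). { assert (H0 := Hge 0%nat ltac:(lia)). assert (H1 := Hg1 0%nat ltac:(lia)). lra. }
  assert (HK1 : (1 <= K)%nat) by lia.
  assert (Key : forall z t0, is_solution K (hfield K gamma eta epspi) (pos_vec K) z t0 ->
     forall t, t0 <= t ->
     eps * rsum K (fun k => (z t k - 1) ^ 2) * exp (2 * (t - t0)) <= rsum K (fun k => (z t0 k - 1) ^ 2)).
  { intros z t0 Hz t Ht.
    assert (D := decay K gamma eta epspi z t0 Hg Hs HK1 he hep Hz t Ht).
    assert (A1 : eps * rsum K (fun k => (z t k - 1) ^ 2) <= rsum K (fun k => gamma k * (z t k - 1) ^ 2)).
    { assert (E : forall n c f, rsum n (fun k => c * f k) = c * rsum n f)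
        by (induction n; simpl; intros; [ring| rewrite IHn; ring]).
      rewrite <- E. apply rsum_le. intros k Hk. assert (H0 := Hge k Hk). apply Rmult_le_compat_r; [apply pow2_ge_0| auto]. }
    assert (A2 : rsum K (fun k => gamma k * (z t0 k - 1) ^ 2) <= rsum K (fun k => (z t0 k - 1) ^ 2)).
    { apply rsum_le. intros k Hk. assert (H0 := Hg1 k Hk). assert (H1 := Hg k Hk). rewrite <- (Rmult_1_l ((z t0 k - 1) ^ 2)) at 2. apply Rmult_le_compat_r; [apply pow2_ge_0| auto]. }
    assert (0 < exp (2 * (t - t0))) by apply exp_pos. nra. }
  assert (Hnn : forall (x : nat -> R), 0 <= rsum K (fun k => (x k - 1) ^ 2)).
  { intros x. apply rsum_nonneg. intros; apply pow2_ge_0. }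
  split.
  - split. { intros k Hk; lra. }
    intros k Hk. unfold hfield, pi_eps.
    assert (Hr : Rpower 1 (- eta) = 1) by (unfold Rpower; rewrite ln_1, Rmult_0_r; apply exp_0).
    rewrite Hr. rewrite (rsum_ext K _ gamma) by (intros; ring). rewrite Hs.
    assert (0 < gamma k) by auto. field. lra.
  - split.
    + intros eta' Heta'. exists (eta' * eps). split; [nra|].
      intros t0 z Ht0 Hz Hd t Ht.
      unfold distK in *. cbv beta in *.
      assert (K0 := Key z t0 Hz t Ht).
      set (S0 := rsum K (fun k => (z t0 k - 1) ^ 2)) in *.
      set (St := rsum K (fun k => (z t k - 1) ^ 2)) in *.
      assert (0 <= S0) by apply Hnn. assert (0 <= St) by apply Hnn.
      assert (HS0 : S0 < (eta' * eps) ^ 2).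
      { rewrite <- (pow2_sqrt S0) by auto. assert (0 <= sqrt S0) by apply sqrt_pos. nra. }
      assert (1 <= exp (2 * (t - t0))).
      { assert (H1 := exp_ineq1_le (2 * (t - t0))). lra. }
      assert (HSt : St < eta' ^ 2).
      { assert (eps * St <= S0) by nra. nra. }
      rewrite <- (sqrt_pow2 eta') by lra. apply sqrt_lt_1_alt. lra.
    + intros eta' rho Heta' Hrho.
      exists (rho ^ 2 / (eps * eta' ^ 2)).
      intros t0 z Ht0 Hz Hd t Ht.
      unfold distK in *. cbv beta in *.
      set (T := rho ^ 2 / (eps * eta' ^ 2)) in *.
      assert (HT : eps * eta' ^ 2 * T = rho ^ 2) by (unfold T; field; lra).
      assert (0 <= T) by (unfold T; apply Rmult_le_pos; [apply pow2_ge_0| left; apply Rinv_0_lt_compat; apply Rmult_lt_0_compat; [lra| apply pow_lt; lra]]).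
      assert (K0 := Key z t0 Hz t ltac:(lra)).
      set (S0 := rsum K (fun k => (z t0 k - 1) ^ 2)) in *.
      set (St := rsum K (fun k => (z t k - 1) ^ 2)) in *.
      assert (0 <= S0) by apply Hnn. assert (0 <= St) by apply Hnn.
      assert (HS0 : S0 < rho ^ 2).
      { rewrite <- (pow2_sqrt S0) by auto. assert (0 <= sqrt S0) by apply sqrt_pos. nra. }
      assert (HE : 1 + 2 * T <= exp (2 * (t - t0))).
      { assert (Hx1 := exp_ineq1_le (2 * (t - t0))). lra. }
      assert (HSt : St < eta' ^ 2).
      { apply Rnot_le_lt. intros Hc.
        assert (eps * eta' ^ 2 * (1 + 2 * T) <= eps * St * exp (2 * (t - t0))).
        { apply Rmult_le_compat; try nra. }
        assert (0 < eps * eta' ^ 2) by nra.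
        nra. }
      rewrite <- (sqrt_pow2 eta') by lra. apply sqrt_lt_1_alt. lra.
Qed.
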